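(* Consider $N$ systems $\dot x_i = f(x_i,u_i,d_i)$, $y_i = h(x_i)$, $i\in\mathcal N=\{1,\dots,N\}$, that are incrementally output-feedback passive (iOFP) with constant $\sigma\in\mathbb R$, with disturbances $d_i=R_iw_i$ generated by exosystems $\dot w_i=s_i(w_i)$ satisfying the monotonicity condition below, and interconnected over a connected undirected graph with adjacency matrix $A=[a_{ij}]$. For each $i\in\mathcal N$ let $\rho_i=\sum_{j\in\mathcal N}a_{ij}(y_j-y_i)$ and apply the controller $$\dot\xi_i = s_i(\xi_i)-R_i^\top\rho_i,\qquad \dot k_i=\gamma_i\rho_i^\top\rho_i,\qquad u_i=-R_i\xi_i+k_i\rho_i,$$ with arbitrary gains $\gamma_i>0$ and arbitrary initial conditions $\xi_i(0)\in\mathbb R^{m_i}$, $k_i(0)\in\mathbb R$. If the solution $(x(t),\xi(t),k(t))$ of the closed-loop system is bounded on $[0,\infty)$, then the outputs synchronize asymptotically; in particular $\lim_{t\to\infty}\|y_i(t)-\bar y(t)\|=0$ for all $i\in\mathcal N$, where $\bar y=\frac1N\sum_{j}y_j$.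
   Context: Each system has state $x_i\in\mathbb R^n$, input $u_i\in\mathbb R^q$, output $y_i\in\mathbb R^q$, disturbance $d_i\in\mathbb R^q$; $f$ is locally Lipschitz and $h$ is continuously differentiable. iOFP with constant $\sigma\in\mathbb R$ means: there exist $\Phi:\mathbb R^n\times\mathbb R^n\to\mathbb R_{\ge0}$ (continuously differentiable) and class-$\mathcal K_\infty$ functions $\underline\alpha,\overline\alpha$ with $\underline\alpha(\|x_i-x_i'\|)\le\Phi(x_i,x_i')\le\overline\alpha(\|x_i-x_i'\|)$ and $\frac{\partial\Phi}{\partial x_i}(x_i,x_i')f(x_i,u_i,d_i)+\frac{\partial\Phi}{\partial x_i'}(x_i,x_i')f(x_i',u_i',d_i')\le\sigma\|y_i-y_i'\|^2+(y_i-y_i')^\top\big((u_i+d_i)-(u_i'+d_i')\big)$ for all $(x_i,u_i,d_i),(x_i',u_i',d_i')\in\mathbb R^n\times\mathbb R^q\times\mathbb R^q$, where $y_i=h(x_i)$, $y_i'=h(x_i')$. Exosystems: $w_i\in\mathbb R^{m_i}$, $\dot w_i=s_i(w_i)$, $d_i=R_iw_i$ with $R_i\in\mathbb R^{q\times m_i}$, $s_i$ locally Lipschitz, $s_i(0)=0$ and $(w_i-w_i')^\top(s_i(w_i)-s_i(w_i'))\le0$ for all $w_i,w_i'$. The graph is undirected and connected: $A$ is symmetric nonnegative with zero diagonal, $a_{ij}>0$ iff $(i,j)$ is an edge. *)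

(* Defs.v *)
From Stdlib Require Import Reals Lra Relations.
From Stdlib Require Fin.
Open Scope R_scope.

Definition vec (n : nat) := Fin.t n -> R.
Definition mat (q m : nat) := Fin.t q -> Fin.t m -> R.

Fixpoint fsum (n : nat) : (Fin.t n -> R) -> R :=
  match n return (Fin.t n -> R) -> R with
  | O => fun _ => 0
  | S p => fun g => g Fin.F1 + fsum p (fun i => g (Fin.FS i))
  end.

Definition vadd {n} (a b : vec n) : vec n := fun c => a c + b c.
Definition vsub {n} (a b : vec n) : vec n := fun c => a c - b c.
Definition vopp {n} (a : vec n) : vec n := fun c => - a c.
Definition vscale {n} (r : R) (a : vec n) : vec n := fun c => r * a c.
Definition vdot {n} (a b : vec n) : R := fsum n (fun c => a c * b c).
Definition vnorm {n} (a : vec n) : R := sqrt (vdot a a).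
Definition vzero {n} : vec n := fun _ => 0.
Definition vfsum {N n} (g : Fin.t N -> vec n) : vec n := fun c => fsum N (fun j => g j c).
Definition matvec {q m} (M : mat q m) (v : vec m) : vec q :=
  fun r => fsum m (fun c => M r c * v c).
Definition matTvec {q m} (M : mat q m) (v : vec q) : vec m :=
  fun c => fsum q (fun r => M r c * v r).

Definition classKinf (al : R -> R) : Prop :=
  al 0 = 0 /\
  (forall r, 0 <= r -> forall eps, 0 < eps -> exists del, 0 < del /\
     forall s, 0 <= s -> Rabs (s - r) < del -> Rabs (al s - al r) < eps) /\
  (forall r s, 0 <= r -> r < s -> al r < al s) /\
  (forall M, exists r, 0 <= r /\ M < al r).

Definition C1_pair {n} (Phi : vec n -> vec n -> R) (D1 D2 : vec n -> vec n -> vec n) : Prop :=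
  (forall x x' : vec n, forall eps, 0 < eps -> exists del, 0 < del /\
     forall hx hx' : vec n,
       sqrt (vnorm hx ^ 2 + vnorm hx' ^ 2) < del ->
       Rabs (Phi (vadd x hx) (vadd x' hx') - Phi x x' - vdot (D1 x x') hx - vdot (D2 x x') hx')
         <= eps * sqrt (vnorm hx ^ 2 + vnorm hx' ^ 2)) /\
  (forall x x' : vec n, forall eps, 0 < eps -> exists del, 0 < del /\
     forall z z' : vec n,
       sqrt (vnorm (vsub z x) ^ 2 + vnorm (vsub z' x') ^ 2) < del ->
       vnorm (vsub (D1 z z') (D1 x x')) < eps /\ vnorm (vsub (D2 z z') (D2 x x')) < eps).

Definition C1_map {n q} (h : vec n -> vec q) : Prop :=
  exists J : vec n -> mat q n,
    (forall x : vec n, forall eps, 0 < eps -> exists del, 0 < del /\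
       forall e : vec n, vnorm e < del ->
         vnorm (vsub (vsub (h (vadd x e)) (h x)) (matvec (J x) e)) <= eps * vnorm e) /\
    (forall x : vec n, forall eps, 0 < eps -> exists del, 0 < del /\
       forall z : vec n, vnorm (vsub z x) < del ->
         forall r c, Rabs (J z r c - J x r c) < eps).

Definition loc_lipschitz3 {n q} (f : vec n -> vec q -> vec q -> vec n) : Prop :=
  forall (x : vec n) (u d : vec q), exists del L, 0 < del /\ 0 <= L /\
    forall (x1 x2 : vec n) (u1 u2 d1 d2 : vec q),
      sqrt (vnorm (vsub x1 x) ^ 2 + vnorm (vsub u1 u) ^ 2 + vnorm (vsub d1 d) ^ 2) < del ->
      sqrt (vnorm (vsub x2 x) ^ 2 + vnorm (vsub u2 u) ^ 2 + vnorm (vsub d2 d) ^ 2) < del ->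
      vnorm (vsub (f x1 u1 d1) (f x2 u2 d2))
        <= L * sqrt (vnorm (vsub x1 x2) ^ 2 + vnorm (vsub u1 u2) ^ 2 + vnorm (vsub d1 d2) ^ 2).

Definition loc_lipschitz1 {m} (s : vec m -> vec m) : Prop :=
  forall w : vec m, exists del L, 0 < del /\ 0 <= L /\
    forall w1 w2 : vec m, vnorm (vsub w1 w) < del -> vnorm (vsub w2 w) < del ->
      vnorm (vsub (s w1) (s w2)) <= L * vnorm (vsub w1 w2).

Definition iOFP {n q} (f : vec n -> vec q -> vec q -> vec n) (h : vec n -> vec q) (sigma : R) : Prop :=
  exists (Phi : vec n -> vec n -> R) (D1 D2 : vec n -> vec n -> vec n) (alo ahi : R -> R),
    (forall x x', 0 <= Phi x x') /\
    C1_pair Phi D1 D2 /\ classKinf alo /\ classKinf ahi /\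
    (forall x x', alo (vnorm (vsub x x')) <= Phi x x' /\ Phi x x' <= ahi (vnorm (vsub x x'))) /\
    (forall (x x' : vec n) (u d u' d' : vec q),
       vdot (D1 x x') (f x u d) + vdot (D2 x x') (f x' u' d')
         <= sigma * vnorm (vsub (h x) (h x')) ^ 2
            + vdot (vsub (h x) (h x')) (vsub (vadd u d) (vadd u' d'))).

Definition exo_ok {m} (s : vec m -> vec m) : Prop :=
  loc_lipschitz1 s /\ s vzero = vzero /\
  (forall w w' : vec m, vdot (vsub w w') (vsub (s w) (s w')) <= 0).

Definition undirected_connected {N} (a : Fin.t N -> Fin.t N -> R) : Prop :=
  (forall i j, a i j = a j i) /\ (forall i j, 0 <= a i j) /\ (forall i, a i i = 0) /\
  (forall i j, clos_refl_trans (Fin.t N) (fun i j => 0 < a i j) i j).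

Definition has_vderiv {n} (g : R -> vec n) (g' : vec n) (t : R) : Prop :=
  forall c, derivable_pt_lim (fun s => g s c) t (g' c).

(* Main.v *)
Require Import Defs.
From Stdlib Require Import Reals Lra Relations.
From Stdlib Require Fin.
From Stdlib Require Import Lia Classical ClassicalEpsilon FunctionalExtensionality.
Open Scope R_scope.


Lemma fsum_ext n (g1 g2 : Fin.t n -> R) : (forall c, g1 c = g2 c) -> fsum n g1 = fsum n g2.
Proof.
  induction n; simpl; intros; auto.
  rewrite H, (IHn (fun i => g1 (Fin.FS i)) (fun i => g2 (Fin.FS i))); auto.
Qed.

Lemma fsum_plus n (g1 g2 : Fin.t n -> R) : fsum n (fun c => g1 c + g2 c) = fsum n g1 + fsum n g2.
Proof.
  induction n; simpl; intros. lra.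
  rewrite (IHn (fun i => g1 (Fin.FS i)) (fun i => g2 (Fin.FS i))); lra.
Qed.

Lemma fsum_scal n r (g : Fin.t n -> R) : fsum n (fun c => r * g c) = r * fsum n g.
Proof.
  induction n; simpl; intros. lra.
  rewrite (IHn (fun i => g (Fin.FS i))); lra.
Qed.

Lemma fsum_const n r : fsum n (fun _ => r) = INR n * r.
Proof.
  induction n; simpl. lra. rewrite IHn. destruct n; simpl; lra.
Qed.

Lemma fsum_le n (g1 g2 : Fin.t n -> R) : (forall c, g1 c <= g2 c) -> fsum n g1 <= fsum n g2.
Proof.
  induction n; simpl; intros. lra.
  specialize (IHn (fun i => g1 (Fin.FS i)) (fun i => g2 (Fin.FS i))). 
  specialize (H Fin.F1) as H1. assert (H2 := IHn (fun i => H (Fin.FS i))). lra.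
Qed.

Lemma fsum_nonneg n (g : Fin.t n -> R) : (forall c, 0 <= g c) -> 0 <= fsum n g.
Proof.
  intros. replace 0 with (fsum n (fun _ => 0)). apply fsum_le; auto.
  rewrite fsum_const; lra.
Qed.

Lemma fsum_abs n (g : Fin.t n -> R) : Rabs (fsum n g) <= fsum n (fun c => Rabs (g c)).
Proof.
  induction n; simpl; intros. rewrite Rabs_R0; lra.
  eapply Rle_trans. apply Rabs_triang. specialize (IHn (fun i => g (Fin.FS i))). lra.
Qed.

Lemma fsum_term n (g : Fin.t n -> R) c : (forall c, 0 <= g c) -> g c <= fsum n g.
Proof.
  induction n. intros; apply (Fin.case0 (fun c => g c <= fsum 0 g) c).
  intros H. apply (Fin.caseS' c (fun c => g c <= fsum (S n) g)); simpl.
  - assert (0 <= fsum n (fun i => g (Fin.FS i))) by (apply fsum_nonneg; auto). lra.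
  - intros p. assert (h := IHn (fun i => g (Fin.FS i)) p (fun i => H (Fin.FS i))).
    specialize (H Fin.F1). simpl in h. lra.
Qed.

Lemma fsum_swap n m (g : Fin.t n -> Fin.t m -> R) :
  fsum n (fun i => fsum m (fun j => g i j)) = fsum m (fun j => fsum n (fun i => g i j)).
Proof.
  induction n; simpl. rewrite fsum_const; lra.
  rewrite (IHn (fun i j => g (Fin.FS i) j)). rewrite <- fsum_plus. reflexivity.
Qed.

Lemma fsum_minus n (g1 g2 : Fin.t n -> R) : fsum n (fun c => g1 c - g2 c) = fsum n g1 - fsum n g2.
Proof.
  replace (fsum n g1 - fsum n g2) with (fsum n g1 + (-1) * fsum n g2) by lra.
  rewrite <- fsum_scal, <- fsum_plus. apply fsum_ext; intros; lra.
Qed.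

Definition tz (g : R -> R) := forall eps, 0 < eps -> exists T, forall t, T <= t -> Rabs (g t) < eps.
Definition nz (g : nat -> R) := forall eps, 0 < eps -> exists K, forall k, (K <= k)%nat -> Rabs (g k) < eps.

Lemma tz_fsum n (g : R -> Fin.t n -> R) : (forall c, tz (fun t => g t c)) -> tz (fun t => fsum n (g t)).
Proof.
  induction n; simpl; intros H eps He.
  - exists 0; intros; rewrite Rabs_R0; lra.
  - destruct (H Fin.F1 (eps/2)) as [T1 H1]; [lra|].
    destruct (IHn (fun t i => g t (Fin.FS i)) (fun c => H (Fin.FS c)) (eps/2)) as [T2 H2]; [lra|].
    exists (Rmax T1 T2); intros t Ht.
    specialize (H1 t (Rle_trans _ _ _ (Rmax_l _ _) Ht)).
    specialize (H2 t (Rle_trans _ _ _ (Rmax_r _ _) Ht)).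
    eapply Rle_lt_trans. apply Rabs_triang. simpl in H2. lra.
Qed.

Lemma nz_fsum n (g : nat -> Fin.t n -> R) : (forall c, nz (fun t => g t c)) -> nz (fun t => fsum n (g t)).
Proof.
  induction n; simpl; intros H eps He.
  - exists 0%nat; intros; rewrite Rabs_R0; lra.
  - destruct (H Fin.F1 (eps/2)) as [T1 H1]; [lra|].
    destruct (IHn (fun t i => g t (Fin.FS i)) (fun c => H (Fin.FS c)) (eps/2)) as [T2 H2]; [lra|].
    exists (Nat.max T1 T2); intros t Ht.
    specialize (H1 t (Nat.le_trans _ _ _ (Nat.le_max_l _ _) Ht)).
    specialize (H2 t (Nat.le_trans _ _ _ (Nat.le_max_r _ _) Ht)).
    eapply Rle_lt_trans. apply Rabs_triang. simpl in H2. lra.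
Qed.

Lemma tz_le (g g' : R -> R) : tz g' -> (exists T0, forall t, T0 <= t -> Rabs (g t) <= g' t) -> tz g.
Proof.
  intros H [T0 H0] eps He. destruct (H eps He) as [T HT]. exists (Rmax T0 T); intros t Ht.
  specialize (H0 t (Rle_trans _ _ _ (Rmax_l _ _) Ht)). specialize (HT t (Rle_trans _ _ _ (Rmax_r _ _) Ht)).
  apply Rabs_def2 in HT. lra.
Qed.

Lemma nz_le (g g' : nat -> R) : nz g' -> (forall t, Rabs (g t) <= g' t) -> nz g.
Proof.
  intros H H0 eps He. destruct (H eps He) as [T HT]. exists T; intros t Ht.
  specialize (H0 t). specialize (HT t Ht). apply Rabs_def2 in HT. lra.
Qed.

Lemma vdot_self_nonneg n (v : vec n) : 0 <= vdot v v.
Proof. unfold vdot. apply fsum_nonneg. intros; nra. Qed.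

Lemma vnorm_nonneg n (v : vec n) : 0 <= vnorm v.
Proof. unfold vnorm. apply sqrt_pos. Qed.

Lemma vnorm_comp n (v : vec n) c : Rabs (v c) <= vnorm v.
Proof.
  unfold vnorm. rewrite <- sqrt_Rsqr_abs. apply sqrt_le_1_alt.
  unfold Rsqr, vdot. apply (fsum_term n (fun c => v c * v c)). intros; nra.
Qed.

Lemma sq_le_sum n (v : vec n) : vdot v v <= (fsum n (fun c => Rabs (v c)))^2.
Proof.
  unfold vdot. induction n; simpl. lra.
  specialize (IHn (fun i => v (Fin.FS i))). simpl in IHn.
  assert (0 <= fsum n (fun c => Rabs (v (Fin.FS c)))) by (apply fsum_nonneg; intros; apply Rabs_pos).
  assert (0 <= Rabs (v Fin.F1)) by apply Rabs_pos.
  assert (v Fin.F1 * v Fin.F1 = Rabs (v Fin.F1) * Rabs (v Fin.F1)).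
  { rewrite <- Rabs_mult. rewrite Rabs_right; nra. }
  nra.
Qed.

Lemma vnorm_le_sum n (v : vec n) : vnorm v <= fsum n (fun c => Rabs (v c)).
Proof.
  unfold vnorm. assert (0 <= fsum n (fun c => Rabs (v c))) by (apply fsum_nonneg; intros; apply Rabs_pos).
  rewrite <- (sqrt_pow2 _ H). apply sqrt_le_1_alt. apply sq_le_sum.
Qed.

Lemma vnorm_zero n : vnorm (@vzero n) = 0.
Proof. unfold vnorm, vdot, vzero. rewrite (fsum_ext n _ (fun _ => 0)) by (intros; lra). rewrite fsum_const, Rmult_0_r. apply sqrt_0. Qed.

Lemma vsub_self n (v : vec n) : vsub v v = vzero.
Proof. apply functional_extensionality; intros; unfold vsub, vzero; lra. Qed.

Lemma vnorm_bound n (v : vec n) B : (forall c, Rabs (v c) <= B) -> vnorm v <= INR n * B.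
Proof.
  intros. eapply Rle_trans. apply vnorm_le_sum. rewrite <- fsum_const. apply fsum_le; auto.
Qed.

Lemma abs_le x b : Rabs x <= b -> -b <= x <= b.
Proof. unfold Rabs; destruct (Rcase_abs x); lra. Qed.

Definition strict (phi : nat -> nat) := forall k, (phi k < phi (S k))%nat.
Definition cvn (u : nat -> R) l := nz (fun k => u k - l).

Lemma strict_lt phi : strict phi -> forall a b, (a < b)%nat -> (phi a < phi b)%nat.
Proof.
  intros H a b; induction b; intros. lia.
  destruct (Nat.eq_dec a b). subst; apply H. specialize (H b). assert (phi a < phi b)%nat by (apply IHb; lia). lia.
Qed.

Lemma strict_ge phi : strict phi -> forall k, (k <= phi k)%nat.
Proof. intros H k; induction k. lia. specialize (H k); lia. Qed.

Lemma strict_comp phi1 phi2 : strict phi1 -> strict phi2 -> strict (fun k => phi1 (phi2 k)).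
Proof. intros H1 H2 k. apply strict_lt; auto. Qed.

Lemma nz_sub g phi : strict phi -> nz g -> nz (fun k => g (phi k)).
Proof.
  intros Hs H eps He. destruct (H eps He) as [K HK]. exists K; intros k Hk.
  apply HK. pose proof (strict_ge phi Hs k); lia.
Qed.

Lemma small_inv eps : 0 < eps -> exists K, forall k, (K <= k)%nat -> / (INR k + 1) < eps.
Proof.
  intros He. destruct (INR_archimed eps 1 He) as [K HK]. exists K; intros k Hk.
  apply le_INR in Hk. assert (0 <= INR K) by apply pos_INR.
  apply Rle_lt_trans with (/ (INR K + 1)).
  apply Rinv_le_contravar; lra.
  apply (Rmult_lt_reg_l (INR K + 1)). lra. rewrite Rinv_r by lra. nra.
Qed.

Lemma BW1 (u : nat -> R) M : (forall k, Rabs (u k) <= M) ->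
  exists phi l, strict phi /\ cvn (fun k => u (phi k)) l.
Proof.
  intros Hb.
  destruct (Bolzano_Weierstrass u (fun c => -M <= c <= M) (compact_P3 (-M) M)) as [l Hl].
  { intros k; specialize (Hb k); apply abs_le in Hb; lra. }
  assert (Hc : forall N e, exists p, (N <= p)%nat /\ Rabs (u p - l) < / (INR e + 1)).
  { intros N e. assert (0 < / (INR e + 1)) by (apply Rinv_0_lt_compat; pose proof (pos_INR e); lra).
    destruct (Hl (disc l (mkposreal _ H)) N) as [p [Hp1 Hp2]].
    { exists (mkposreal _ H). intros y Hy; exact Hy. }
    exists p; split; auto. }
  set (g := fun N e => proj1_sig (constructive_indefinite_description _ (Hc N e))).
  assert (Hg : forall N e, (N <= g N e)%nat /\ Rabs (u (g N e) - l) < / (INR e + 1)).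
  { intros; unfold g; destruct (constructive_indefinite_description _ (Hc N e)); simpl; auto. }
  set (phi := fix phi (k : nat) : nat := match k with O => g O O | S k' => g (S (phi k')) (S k') end).
  assert (Hp : forall k, Rabs (u (phi k) - l) < / (INR k + 1)).
  { intros [|k]. apply (Hg O O). apply (Hg (S (phi k)) (S k)). }
  exists phi, l; split.
  - intros k. change (phi (S k)) with (g (S (phi k)) (S k)). destruct (Hg (S (phi k)) (S k)); lia.
  - intros eps He. destruct (small_inv eps He) as [K HK]. exists K; intros k Hk.
    specialize (HK k Hk). specialize (Hp k). lra.
Qed.

Lemma BWvec D (z : nat -> vec D) M : (forall k c, Rabs (z k c) <= M) ->
  exists phi p, strict phi /\ forall c, cvn (fun k => z (phi k) c) (p c).
Proof.
  revert z. induction D; intros z Hb.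
  - exists (fun k => k), (fun _ => 0); split. intros k; lia.
    intros c; apply (Fin.case0 (fun c => cvn (fun k => z k c) 0) c).
  - destruct (BW1 (fun k => z k Fin.F1) M (fun k => Hb k Fin.F1)) as [phi1 [l [Hs1 Hc1]]].
    destruct (IHD (fun k c => z (phi1 k) (Fin.FS c))) as [phi2 [p' [Hs2 Hc2]]].
    { intros; apply Hb. }
    exists (fun k => phi1 (phi2 k)), (fun c => Fin.caseS' c (fun _ => R) l p'). split.
    + apply strict_comp; auto.
    + intros c. apply (Fin.caseS' c (fun c => cvn (fun k => z (phi1 (phi2 k)) c) (Fin.caseS' c (fun _ => R) l p'))).
      * simpl. apply (nz_sub (fun k => z (phi1 k) Fin.F1 - l)); auto.
      * intros c'. simpl. apply Hc2.
Qed.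

Lemma cvn_vnorm D (z : nat -> vec D) p : (forall c, cvn (fun k => z k c) (p c)) -> nz (fun k => vnorm (vsub (z k) p)).
Proof.
  intros H. apply nz_le with (fun k => fsum D (fun c => Rabs (vsub (z k) p c))).
  - apply nz_fsum. intros c. intros eps He. destruct (H c eps He) as [K HK]. exists K; intros.
    rewrite Rabs_Rabsolu. apply HK; auto.
  - intros k. rewrite Rabs_right by (apply Rle_ge, vnorm_nonneg). apply vnorm_le_sum.
Qed.

Lemma choice_nat {A : Type} (P : nat -> A -> Prop) : (forall k, exists a, P k a) -> exists f, forall k, P k (f k).
Proof.
  intros H. exists (fun k => proj1_sig (constructive_indefinite_description _ (H k))).
  intros k. apply (proj2_sig (constructive_indefinite_description _ (H k))).
Qed.

Lemma nz_ev (g : nat -> R) d : nz g -> 0 < d -> exists K, forall k, (K <= k)%nat -> g k < d.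
Proof. intros H Hd. destruct (H d Hd) as [K HK]. exists K; intros k Hk. specialize (HK k Hk). apply Rabs_def2 in HK; lra. Qed.

Lemma loc_glob3 D1 D2 D3 (g : vec D1 -> vec D2 -> vec D3 -> R) :
  (forall p1 p2 p3, exists del B, 0 < del /\ forall z1 z2 z3,
     vnorm (vsub z1 p1) < del -> vnorm (vsub z2 p2) < del -> vnorm (vsub z3 p3) < del -> g z1 z2 z3 <= B) ->
  forall M, exists B, forall z1 z2 z3, (forall c, Rabs (z1 c) <= M) -> (forall c, Rabs (z2 c) <= M) ->
     (forall c, Rabs (z3 c) <= M) -> g z1 z2 z3 <= B.
Proof.
  intros Hl M. apply NNPP; intros Hn.
  assert (H1 : forall k : nat, exists z : vec D1 * vec D2 * vec D3,
    (forall c, Rabs (fst (fst z) c) <= M) /\ (forall c, Rabs (snd (fst z) c) <= M) /\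
    (forall c, Rabs (snd z c) <= M) /\ INR k < g (fst (fst z)) (snd (fst z)) (snd z)).
  { intros k. apply NNPP; intros Hk. apply Hn. exists (INR k). intros z1 z2 z3 Hz1 Hz2 Hz3.
    apply Rnot_lt_le; intros Hlt. apply Hk. exists (z1, z2, z3); simpl; auto. }
  destruct (choice_nat _ H1) as [zs Hzs].
  destruct (BWvec D1 (fun k => fst (fst (zs k))) M) as [phi1 [p1 [Hs1 Hc1]]].
  { intros; apply Hzs. }
  destruct (BWvec D2 (fun k => snd (fst (zs (phi1 k)))) M) as [phi2 [p2 [Hs2 Hc2]]].
  { intros; apply Hzs. }
  destruct (BWvec D3 (fun k => snd (zs (phi1 (phi2 k)))) M) as [phi3 [p3 [Hs3 Hc3]]].
  { intros; apply Hzs. }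
  set (psi := fun k => phi1 (phi2 (phi3 k))).
  assert (Hps : strict psi) by (unfold psi; apply (strict_comp phi1 (fun k => phi2 (phi3 k))); auto; apply strict_comp; auto).
  destruct (Hl p1 p2 p3) as [del [B [Hd HB]]].
  assert (C1 : nz (fun k => vnorm (vsub (fst (fst (zs (psi k)))) p1))).
  { apply cvn_vnorm. intros c. apply (nz_sub (fun k => fst (fst (zs (phi1 k))) c - p1 c) (fun k => phi2 (phi3 k))).
    apply strict_comp; auto. apply Hc1. }
  assert (C2 : nz (fun k => vnorm (vsub (snd (fst (zs (psi k)))) p2))).
  { apply cvn_vnorm. intros c. apply (nz_sub (fun k => snd (fst (zs (phi1 (phi2 k)))) c - p2 c) phi3); auto. apply Hc2. }
  assert (C3 : nz (fun k => vnorm (vsub (snd (zs (psi k))) p3))).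
  { apply cvn_vnorm. intros c. apply Hc3. }
  destruct (nz_ev _ _ C1 Hd) as [K1 HK1]. destruct (nz_ev _ _ C2 Hd) as [K2 HK2]. destruct (nz_ev _ _ C3 Hd) as [K3 HK3].
  destruct (INR_archimed 1 B) as [K4 HK4]; [lra|].
  set (k := Nat.max (Nat.max K1 K2) (Nat.max K3 K4)).
  assert (HB' := HB _ _ _ (HK1 k ltac:(lia)) (HK2 k ltac:(lia)) (HK3 k ltac:(lia))).
  destruct (Hzs (psi k)) as [_ [_ [_ Hg]]].
  assert (INR K4 <= INR (psi k)). { apply le_INR. pose proof (strict_ge psi Hps k). lia. }
  lra.
Qed.

Definition hloc {D E} (h : vec D -> vec E) := forall p, exists del C, 0 < del /\ 0 <= C /\
  forall z, vnorm (vsub z p) < del -> forall r, Rabs (h z r - h p r) <= C * vnorm (vsub z p).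

Lemma matvec_bound q m (J : mat q m) e r : Rabs (matvec J e r) <= fsum q (fun r => fsum m (fun c => Rabs (J r c))) * vnorm e.
Proof.
  unfold matvec. eapply Rle_trans. apply fsum_abs.
  apply Rle_trans with (fsum m (fun c => Rabs (J r c)) * vnorm e).
  - rewrite Rmult_comm, <- fsum_scal. apply fsum_le; intros c. rewrite Rabs_mult.
    pose proof (vnorm_comp _ e c). pose proof (Rabs_pos (J r c)). nra.
  - apply Rmult_le_compat_r. apply vnorm_nonneg.
    apply (fsum_term q (fun r => fsum m (fun c => Rabs (J r c)))). intros; apply fsum_nonneg; intros; apply Rabs_pos.
Qed.

Lemma C1_hloc D E (h : vec D -> vec E) : C1_map h -> hloc h.
Proof.
  intros [J [HJ _]] p. destruct (HJ p 1 Rlt_0_1) as [del [Hd H]].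
  set (C0 := fsum E (fun r => fsum D (fun c => Rabs (J p r c)))).
  assert (0 <= C0) by (apply fsum_nonneg; intros; apply fsum_nonneg; intros; apply Rabs_pos).
  exists del, (1 + C0); split; [auto|split; [lra|]].
  intros z Hz r. specialize (H (vsub z p) Hz).
  replace (vadd p (vsub z p)) with z in H by (apply functional_extensionality; intros; unfold vadd, vsub; lra).
  pose proof (vnorm_comp _ (vsub (vsub (h z) (h p)) (matvec (J p) (vsub z p))) r) as H2.
  assert (E0 : vsub (vsub (h z) (h p)) (matvec (J p) (vsub z p)) r = h z r - h p r - matvec (J p) (vsub z p) r) by reflexivity.
  rewrite E0 in H2.
  pose proof (matvec_bound _ _ (J p) (vsub z p) r) as H3.
  apply abs_le in H2. fold C0 in H3. apply abs_le in H3.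
  apply Rabs_le. rewrite Rmult_plus_distr_r. lra.
Qed.

Lemma unif_cont D E (h : vec D -> vec E) : hloc h ->
  forall M eps, 0 < eps -> exists del, 0 < del /\ forall z z', (forall c, Rabs (z c) <= M) ->
    vnorm (vsub z z') < del -> forall r, Rabs (h z r - h z' r) < eps.
Proof.
  intros Hh M eps He. apply NNPP; intros Hn.
  assert (H1 : forall k : nat, exists zz : vec D * vec D * Fin.t E,
    (forall c, Rabs (fst (fst zz) c) <= M) /\ vnorm (vsub (fst (fst zz)) (snd (fst zz))) < / (INR k + 1) /\
    eps <= Rabs (h (fst (fst zz)) (snd zz) - h (snd (fst zz)) (snd zz))).
  { intros k. apply NNPP; intros Hk. apply Hn. exists (/ (INR k + 1)). split.
    apply Rinv_0_lt_compat; pose proof (pos_INR k); lra.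
    intros z z' Hz Hzz r. apply Rnot_le_lt; intros Hle. apply Hk. exists (z, z', r); simpl; auto. }
  destruct (choice_nat _ H1) as [zs Hzs].
  destruct (BWvec D (fun k => fst (fst (zs k))) M) as [phi [p [Hs Hc]]].
  { intros; apply Hzs. }
  destruct (Hh p) as [del [C [Hd [HC Hl]]]].
  assert (N0 : nz (fun k => vnorm (vsub (fst (fst (zs (phi k)))) (snd (fst (zs (phi k))))))).
  { intros e He'. destruct (small_inv e He') as [K HK]. exists K; intros k Hk.
    destruct (Hzs (phi k)) as [_ [Hv _]]. pose proof (vnorm_nonneg _ (vsub (fst (fst (zs (phi k)))) (snd (fst (zs (phi k)))))).
    rewrite Rabs_right by lra. specialize (HK (phi k)). pose proof (strict_ge phi Hs k).
    assert (/ (INR (phi k) + 1) < e) by (apply HK; lia). lra. }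
  assert (N1 : nz (fun k => vnorm (vsub (fst (fst (zs (phi k)))) p))) by (apply cvn_vnorm; auto).
  assert (N2 : nz (fun k => vnorm (vsub (snd (fst (zs (phi k)))) p))).
  { apply cvn_vnorm. intros c. apply nz_le with (fun k => vnorm (vsub (fst (fst (zs (phi k)))) (snd (fst (zs (phi k))))) + Rabs (fst (fst (zs (phi k))) c - p c)).
    - intros e He'. destruct (N0 (e/2)) as [K1 HK1]; [lra|]. destruct (Hc c (e/2)) as [K2 HK2]; [lra|].
      exists (Nat.max K1 K2); intros k Hk. specialize (HK1 k ltac:(lia)). specialize (HK2 k ltac:(lia)). simpl in HK2.
      pose proof (vnorm_nonneg _ (vsub (fst (fst (zs (phi k)))) (snd (fst (zs (phi k)))))).
      pose proof (Rabs_pos (fst (fst (zs (phi k))) c - p c)).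
      rewrite Rabs_right in HK1 by lra. rewrite Rabs_right by lra. lra.
    - intros k. pose proof (vnorm_comp _ (vsub (fst (fst (zs (phi k)))) (snd (fst (zs (phi k))))) c) as Hv.
      change (vsub (fst (fst (zs (phi k)))) (snd (fst (zs (phi k)))) c) with (fst (fst (zs (phi k))) c - snd (fst (zs (phi k))) c) in Hv.
      change (vsub (snd (fst (zs (phi k)))) p c) with (snd (fst (zs (phi k))) c - p c).
      replace (snd (fst (zs (phi k))) c - p c) with (- (fst (fst (zs (phi k))) c - snd (fst (zs (phi k))) c) + (fst (fst (zs (phi k))) c - p c)) by ring.
      eapply Rle_trans. apply Rabs_triang. rewrite Rabs_Ropp. lra. }
  set (e1 := Rmin del (eps / (2 * (C + 1)))).
  assert (He1 : 0 < e1) by (unfold e1; apply Rmin_glb_lt; auto; apply Rdiv_lt_0_compat; lra).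
  destruct (nz_ev _ _ N1 He1) as [K1 HK1]. destruct (nz_ev _ _ N2 He1) as [K2 HK2].
  set (k := Nat.max K1 K2). specialize (HK1 k ltac:(lia)). specialize (HK2 k ltac:(lia)).
  destruct (Hzs (phi k)) as [_ [_ Hge]].
  set (z := fst (fst (zs (phi k)))) in *. set (z' := snd (fst (zs (phi k)))) in *. set (r := snd (zs (phi k))) in *.
  assert (E1 : e1 <= del) by apply Rmin_l. assert (E2 : e1 <= eps / (2 * (C + 1))) by apply Rmin_r.
  assert (A1 := Hl z ltac:(lra) r). assert (A2 := Hl z' ltac:(lra) r).
  assert (C * e1 < eps / 2).
  { apply Rle_lt_trans with (C * (eps / (2 * (C + 1)))). apply Rmult_le_compat_l; lra.
    apply (Rmult_lt_reg_r (2 * (C+1))). lra. field_simplify; try lra; try nra. }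
  assert (Rabs (h z r - h z' r) <= Rabs (h z r - h p r) + Rabs (h z' r - h p r)).
  { replace (h z r - h z' r) with ((h z r - h p r) + - (h z' r - h p r)) by ring.
    rewrite <- (Rabs_Ropp (h z' r - h p r)). apply Rabs_triang. }
  pose proof (vnorm_nonneg _ (vsub z p)). pose proof (vnorm_nonneg _ (vsub z' p)).
  assert (C * vnorm (vsub z p) <= C * e1) by (apply Rmult_le_compat_l; lra).
  assert (C * vnorm (vsub z' p) <= C * e1) by (apply Rmult_le_compat_l; lra).
  lra.
Qed.

Lemma h_bound D E (h : vec D -> vec E) : C1_map h -> forall M, exists Y, forall z,
  (forall c, Rabs (z c) <= M) -> forall r, Rabs (h z r) <= Y.
Proof.
  intros Hc M. pose proof (C1_hloc _ _ h Hc) as Hl.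
  destruct (loc_glob3 D 0 0 (fun z _ _ => fsum E (fun r => Rabs (h z r)))) with (M := M) as [Y HY].
  - intros p1 p2 p3. destruct (Hl p1) as [del [C [Hd [HC H]]]].
    exists del, (fsum E (fun r => Rabs (h p1 r) + C * del)). split; auto. intros z1 z2 z3 H1 _ _.
    apply fsum_le; intros r. specialize (H z1 H1 r).
    assert (C * vnorm (vsub z1 p1) <= C * del) by (apply Rmult_le_compat_l; lra).
    replace (h z1 r) with ((h z1 r - h p1 r) + h p1 r) by ring.
    eapply Rle_trans. apply Rabs_triang. lra.
  - exists Y. intros z Hz r. eapply Rle_trans. 2: apply (HY z (fun c => Fin.case0 _ c) (fun c => Fin.case0 _ c)); auto.
    apply (fsum_term E (fun r => Rabs (h z r))). intros; apply Rabs_pos.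
    intros c; apply (Fin.case0 (fun c => Rabs (Fin.case0 (fun _ : Fin.t 0 => R) c) <= M) c).
    intros c; apply (Fin.case0 (fun c => Rabs (Fin.case0 (fun _ : Fin.t 0 => R) c) <= M) c).
Qed.

Lemma sqrt3_le a b c : 0 <= a -> 0 <= b -> 0 <= c -> sqrt (a ^ 2 + b ^ 2 + c ^ 2) <= a + b + c.
Proof.
  intros. rewrite <- (sqrt_pow2 (a + b + c)) by lra. apply sqrt_le_1_alt. nra.
Qed.

Lemma f_bound n q (f : vec n -> vec q -> vec q -> vec n) : loc_lipschitz3 f -> forall M, exists B,
  forall x u d, (forall c, Rabs (x c) <= M) -> (forall c, Rabs (u c) <= M) -> (forall c, Rabs (d c) <= M) ->
  forall c, Rabs (f x u d c) <= B.
Proof.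
  intros Hf M.
  destruct (loc_glob3 n q q (fun x u d => fsum n (fun c => Rabs (f x u d c)))) with (M := M) as [B HB].
  - intros p1 p2 p3. destruct (Hf p1 p2 p3) as [del [L [Hd [HL H]]]].
    exists (del / 3), (fsum n (fun c => Rabs (f p1 p2 p3 c) + L * del)). split; [lra|].
    intros z1 z2 z3 H1 H2 H3. apply fsum_le; intros c.
    assert (Hs : sqrt (vnorm (vsub z1 p1) ^ 2 + vnorm (vsub z2 p2) ^ 2 + vnorm (vsub z3 p3) ^ 2) < del).
    { eapply Rle_lt_trans. apply sqrt3_le; apply vnorm_nonneg. lra. }
    assert (Hp : sqrt (vnorm (vsub p1 p1) ^ 2 + vnorm (vsub p2 p2) ^ 2 + vnorm (vsub p3 p3) ^ 2) < del).
    { rewrite !vsub_self, !vnorm_zero. replace (0 ^ 2 + 0 ^ 2 + 0 ^ 2) with 0 by ring. rewrite sqrt_0; lra. }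
    specialize (H z1 p1 z2 p2 z3 p3 Hs Hp).
    assert (L * sqrt (vnorm (vsub z1 p1) ^ 2 + vnorm (vsub z2 p2) ^ 2 + vnorm (vsub z3 p3) ^ 2) <= L * del)
      by (apply Rmult_le_compat_l; lra).
    pose proof (vnorm_comp _ (vsub (f z1 z2 z3) (f p1 p2 p3)) c) as H4.
    change (vsub (f z1 z2 z3) (f p1 p2 p3) c) with (f z1 z2 z3 c - f p1 p2 p3 c) in H4.
    replace (f z1 z2 z3 c) with ((f z1 z2 z3 c - f p1 p2 p3 c) + f p1 p2 p3 c) by ring.
    eapply Rle_trans. apply Rabs_triang. lra.
  - exists B. intros x u d Hx Hu Hd c. eapply Rle_trans. 2: apply (HB x u d); auto.
    apply (fsum_term n (fun c => Rabs (f x u d c))). intros; apply Rabs_pos.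
Qed.

Lemma deriv_nonneg (g g' : R -> R) a : (forall t, a < t -> derivable_pt_lim g t (g' t)) ->
  (forall t, a < t -> 0 <= g' t) -> forall t1 t2, a < t1 -> t1 <= t2 -> g t1 <= g t2.
Proof.
  intros Hd Hp t1 t2 H1 H12. destruct (Rle_lt_or_eq_dec _ _ H12) as [Hlt|Heq]; [|subst; lra].
  destruct (MVT_cor2 g g' t1 t2) as [c [Hc1 Hc2]]. lra. intros; apply Hd; lra.
  specialize (Hp c ltac:(lra)). nra.
Qed.

Lemma deriv_lip (g g' : R -> R) a B : (forall t, a < t -> derivable_pt_lim g t (g' t)) ->
  (forall t, a < t -> Rabs (g' t) <= B) -> forall t1 t2, a < t1 -> a < t2 -> Rabs (g t1 - g t2) <= B * Rabs (t1 - t2).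
Proof.
  intros Hd Hp.
  assert (K : forall t1 t2, a < t1 -> t1 <= t2 -> Rabs (g t1 - g t2) <= B * Rabs (t1 - t2)).
  { intros t1 t2 H1 H12. destruct (Rle_lt_or_eq_dec _ _ H12) as [Hlt|Heq]; [|subst].
    2:{ replace (t2 - t2) with 0 by ring. replace (g t2 - g t2) with 0 by ring. rewrite Rabs_R0. lra. }
    destruct (MVT_cor2 g g' t1 t2) as [c [Hc1 Hc2]]. lra. intros; apply Hd; lra.
    specialize (Hp c ltac:(lra)). rewrite <- Rabs_Ropp. replace (- (g t1 - g t2)) with (g' c * (t2 - t1)) by lra.
    rewrite Rabs_mult, <- (Rabs_Ropp (t1 - t2)). replace (- (t1 - t2)) with (t2 - t1) by ring.
    apply Rmult_le_compat_r; auto. apply Rabs_pos. }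
  intros t1 t2 H1 H2. destruct (Rle_dec t1 t2). apply K; auto.
  rewrite <- Rabs_Ropp, <- (Rabs_Ropp (t1 - t2)). replace (- (g t1 - g t2)) with (g t2 - g t1) by ring.
  replace (- (t1 - t2)) with (t2 - t1) by ring. apply K; lra.
Qed.

Lemma fsum_deriv n (g : R -> Fin.t n -> R) (g' : Fin.t n -> R) t :
  (forall c, derivable_pt_lim (fun s => g s c) t (g' c)) -> derivable_pt_lim (fun s => fsum n (g s)) t (fsum n g').
Proof.
  revert g g'; induction n; intros g g' H; simpl.
  - apply derivable_pt_lim_const.
  - apply (derivable_pt_lim_plus (fun s => g s Fin.F1) (fun s => fsum n (fun i => g s (Fin.FS i)))).
    apply H. apply (IHn (fun s i => g s (Fin.FS i))). intros; apply H.
Qed.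

Lemma vdot_deriv n (g : R -> vec n) (g' : vec n) t : has_vderiv g g' t ->
  derivable_pt_lim (fun s => vdot (g s) (g s)) t (2 * vdot (g t) g').
Proof.
  intros H. unfold vdot. rewrite <- fsum_scal.
  replace (fsum n (fun c => 2 * (g t c * g' c))) with (fsum n (fun c => g' c * g t c + g t c * g' c))
    by (apply fsum_ext; intros; ring).
  apply (fsum_deriv n (fun s c => g s c * g s c)). intros c.
  apply (derivable_pt_lim_mult (fun s => g s c) (fun s => g s c)); apply H.
Qed.

Lemma adapt (k kd rr : R -> R) gam M : 0 < gam ->
  (forall t, 0 < t -> derivable_pt_lim k t (kd t)) ->
  (forall t, 0 < t -> 0 <= kd t) ->
  (forall t, 0 < t -> gam * rr t ^ 2 <= kd t) ->
  (forall t, 0 <= t -> Rabs (k t) <= M) ->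
  (forall eps, 0 < eps -> exists del, 0 < del /\ forall t t', 1 <= t -> 1 <= t' -> Rabs (t - t') <= del -> Rabs (rr t - rr t') < eps) ->
  tz rr.
Proof.
  intros Hg Hd Hp Hr Hb Hu. apply NNPP; intros Hn.
  assert (Hx : exists eps, 0 < eps /\ forall T, exists t, T <= t /\ eps <= Rabs (rr t)).
  { apply NNPP; intros H. apply Hn. intros eps He. apply NNPP; intros H2. apply H. exists eps; split; auto.
    intros T. apply NNPP; intros H3. apply H2. exists T; intros t Ht. apply Rnot_le_lt; intros H4. apply H3. exists t; auto. }
  destruct Hx as [eps [He Hx]].
  destruct (Hu (eps / 2)) as [del [Hdl Hdel]]; [lra|].
  set (eta := gam * (eps / 2) ^ 2 * del).
  assert (Heta : 0 < eta) by (unfold eta; apply Rmult_lt_0_compat; [apply Rmult_lt_0_compat|]; auto; apply pow_lt; lra).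
  assert (Hmono := deriv_nonneg k kd 0 Hd Hp).
  assert (Step : forall t, 1 <= t -> exists t', t <= t' /\ k t + eta <= k t').
  { intros t Ht. destruct (Hx t) as [t1 [Ht1 Hr1]].
    exists (t1 + del); split; [lra|].
    destruct (MVT_cor2 k kd t1 (t1 + del)) as [c [Hc1 Hc2]]. lra. intros; apply Hd; lra.
    assert (Rabs (rr t1 - rr c) < eps / 2) by (apply Hdel; try lra; rewrite Rabs_left; lra).
    assert (eps / 2 <= Rabs (rr c)).
    { unfold Rabs in *; destruct (Rcase_abs (rr t1 - rr c)), (Rcase_abs (rr t1)), (Rcase_abs (rr c)); lra. }
    assert ((eps / 2) ^ 2 <= rr c ^ 2).
    { rewrite <- (pow2_abs (rr c)). apply pow_incr. lra. }
    assert (kd c * del >= eta).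
    { unfold eta. specialize (Hr c ltac:(lra)). assert (gam * (eps/2)^2 <= kd c) by nra. nra. }
    assert (k t <= k t1) by (apply Hmono; lra). lra. }
  assert (Iter : forall m : nat, exists t, 1 <= t /\ k 1 + INR m * eta <= k t).
  { induction m. exists 1; simpl; lra.
    destruct IHm as [t [Ht Hkt]]. destruct (Step t Ht) as [t' [Ht' Hk']].
    exists t'; split; [lra|]. rewrite S_INR. lra. }
  destruct (INR_archimed eta (2 * M) Heta) as [m Hm].
  destruct (Iter m) as [t [Ht Hkt]].
  pose proof (Hb t ltac:(lra)). pose proof (Hb 1 ltac:(lra)).
  apply abs_le in H. apply abs_le in H0. lra.
Qed.

Lemma lap_id N (a : Fin.t N -> Fin.t N -> R) (z : Fin.t N -> R) : (forall i j, a i j = a j i) ->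
  fsum N (fun i => z i * fsum N (fun j => a i j * (z j - z i))) =
  - / 2 * fsum N (fun i => fsum N (fun j => a i j * (z i - z j) ^ 2)).
Proof.
  intros Hs.
  set (G := fun i j => a i j * z i * (z j - z i)).
  assert (E1 : fsum N (fun i => z i * fsum N (fun j => a i j * (z j - z i))) = fsum N (fun i => fsum N (fun j => G i j))).
  { apply fsum_ext; intros i. rewrite <- fsum_scal. apply fsum_ext; intros j. unfold G; ring. }
  assert (E2 : fsum N (fun i => fsum N (fun j => G i j)) = fsum N (fun i => fsum N (fun j => G j i))).
  { apply fsum_swap. }
  assert (E3 : fsum N (fun i => fsum N (fun j => G i j)) + fsum N (fun i => fsum N (fun j => G j i)) =
               - fsum N (fun i => fsum N (fun j => a i j * (z i - z j) ^ 2))).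
  { rewrite <- fsum_plus. rewrite <- (Rmult_1_l (fsum N (fun i => fsum N (fun j => a i j * (z i - z j) ^ 2)))).
    rewrite Ropp_mult_distr_l, <- fsum_scal. apply fsum_ext; intros i. rewrite <- fsum_plus, <- fsum_scal.
    apply fsum_ext; intros j. unfold G. rewrite (Hs j i). ring. }
  rewrite E1. lra.
Qed.

Lemma tz_ext g g' : tz g -> (forall t, g' t = g t) -> tz g'.
Proof. intros H E eps He. destruct (H eps He) as [T HT]. exists T; intros. rewrite E; auto. Qed.

Lemma tz_plus g1 g2 : tz g1 -> tz g2 -> tz (fun t => g1 t + g2 t).
Proof.
  intros H1 H2 eps He. destruct (H1 (eps/2)) as [T1 HT1]; [lra|]. destruct (H2 (eps/2)) as [T2 HT2]; [lra|].
  exists (Rmax T1 T2); intros t Ht. specialize (HT1 t (Rle_trans _ _ _ (Rmax_l _ _) Ht)).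
  specialize (HT2 t (Rle_trans _ _ _ (Rmax_r _ _) Ht)). eapply Rle_lt_trans. apply Rabs_triang. lra.
Qed.

Lemma tz_scal c g : tz g -> tz (fun t => c * g t).
Proof.
  intros H eps He. destruct (H (eps / (Rabs c + 1))) as [T HT].
  { apply Rdiv_lt_0_compat; auto. pose proof (Rabs_pos c); lra. }
  exists T; intros t Ht. specialize (HT t Ht). rewrite Rabs_mult. pose proof (Rabs_pos c).
  apply Rle_lt_trans with ((Rabs c + 1) * Rabs (g t)). pose proof (Rabs_pos (g t)); nra.
  apply (Rmult_lt_compat_l (Rabs c + 1)) in HT; [|lra]. field_simplify in HT; lra.
Qed.

Lemma tz_abs g : tz g -> tz (fun t => Rabs (g t)).
Proof. intros H eps He. destruct (H eps He) as [T HT]. exists T; intros. rewrite Rabs_Rabsolu; auto. Qed.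

Lemma tz_sq g c : 0 < c -> tz (fun t => c * g t ^ 2) -> tz g.
Proof.
  intros Hc H eps He. destruct (H (c * eps ^ 2)) as [T HT]. apply Rmult_lt_0_compat; auto. apply pow_lt; auto.
  exists T; intros t Ht. specialize (HT t Ht). apply Rnot_le_lt; intros Hle.
  assert (eps ^ 2 <= g t ^ 2) by (rewrite <- (pow2_abs (g t)); apply pow_incr; lra).
  assert (0 <= g t ^ 2) by (apply pow2_ge_0).
  rewrite Rabs_right in HT by nra. nra.
Qed.

Theorem theorem1
  (N n q : nat) (m : Fin.t N -> nat)
  (f : vec n -> vec q -> vec q -> vec n) (h : vec n -> vec q) (sigma : R)
  (Rm : forall i : Fin.t N, mat q (m i))
  (s : forall i : Fin.t N, vec (m i) -> vec (m i))
  (a : Fin.t N -> Fin.t N -> R) (gamma : Fin.t N -> R)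
  (x : Fin.t N -> R -> vec n)
  (w : forall i : Fin.t N, R -> vec (m i))
  (xi : forall i : Fin.t N, R -> vec (m i))
  (k : Fin.t N -> R -> R) :
  loc_lipschitz3 f -> C1_map h -> iOFP f h sigma ->
  (forall i, exo_ok (s i)) ->
  undirected_connected a ->
  (forall i, 0 < gamma i) ->
  let y := fun i t => h (x i t) in
  let rho := fun i t => vfsum (fun j => vscale (a i j) (vsub (y j t) (y i t))) in
  let d := fun i t => matvec (Rm i) (w i t) in
  let u := fun i t => vadd (vopp (matvec (Rm i) (xi i t))) (vscale (k i t) (rho i t)) in
  (* closed-loop dynamics on (0, oo) *)
  (forall i t, 0 < t ->
     has_vderiv (x i) (f (x i t) (u i t) (d i t)) t /\
     has_vderiv (w i) (s i (w i t)) t /\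
     has_vderiv (xi i) (vsub (s i (xi i t)) (matTvec (Rm i) (rho i t))) t /\
     derivable_pt_lim (k i) t (gamma i * vdot (rho i t) (rho i t))) ->
  (* boundedness of (x, xi, k) on [0, oo) *)
  (exists M, forall i t, 0 <= t ->
     vnorm (x i t) <= M /\ vnorm (xi i t) <= M /\ Rabs (k i t) <= M) ->
  forall i, forall eps, 0 < eps -> exists T, forall t, T <= t ->
    vnorm (vsub (y i t) (vscale (/ INR N) (vfsum (fun j => y j t)))) < eps.
Proof.
  intros Hf Hh _ Hexo [Hsym [Hapos [Hdiag Hconn]]] Hgam y rho d u Hdyn [M HM] i0.
  assert (HM0 : 0 <= M) by (destruct (HM i0 0 (Rle_refl 0)) as [H _]; pose proof (vnorm_nonneg _ (x i0 0)); lra).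
  assert (Hx : forall j t c, 0 <= t -> Rabs (x j t c) <= M).
  { intros j t c Ht. eapply Rle_trans. apply vnorm_comp. apply (HM j t Ht). }
  assert (Hxi : forall j t, 0 <= t -> vnorm (xi j t) <= M) by (intros; apply HM; auto).
  assert (Hk : forall j t, 0 <= t -> Rabs (k j t) <= M) by (intros; apply HM; auto).
  destruct (h_bound _ _ h Hh M) as [Y0 HY0].
  assert (EY : exists Y, 0 <= Y /\ forall j t r, 0 <= t -> Rabs (y j t r) <= Y).
  { exists (Rabs Y0); split. apply Rabs_pos. intros j t r Ht. eapply Rle_trans. apply HY0. intros c; apply Hx; auto. apply Rle_abs. }
  clear Y0 HY0. destruct EY as [Y [HY0 Hy]].
  assert (Hw : forall j t, 1/2 <= t -> vnorm (w j t) <= vnorm (w j (1/2))).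
  { intros j t Ht. unfold vnorm. apply sqrt_le_1_alt.
    assert (Hm := deriv_nonneg (fun r => - vdot (w j r) (w j r)) (fun r => - (2 * vdot (w j r) (s j (w j r)))) 0).
    cut (- vdot (w j (1/2)) (w j (1/2)) <= - vdot (w j t) (w j t)). lra.
    apply Hm; try lra.
    - intros r Hr. apply derivable_pt_lim_opp. apply vdot_deriv. apply Hdyn; auto.
    - intros r Hr. destruct (Hexo j) as [_ [Hs0 Hmon]]. specialize (Hmon (w j r) vzero).
      rewrite Hs0 in Hmon.
      replace (vsub (w j r) vzero) with (w j r) in Hmon by (apply functional_extensionality; intros; unfold vsub, vzero; ring).
      replace (vsub (s j (w j r)) vzero) with (s j (w j r)) in Hmon by (apply functional_extensionality; intros; unfold vsub, vzero; ring).
      lra. }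
  assert (Erho : forall j t r, rho j t r = fsum N (fun l => a j l * (y l t r - y j t r))) by reflexivity.
  set (P := fsum N (fun j => fsum N (fun l => a j l * (2 * Y)))).
  assert (Hrho : forall j t r, 0 <= t -> Rabs (rho j t r) <= P).
  { intros j t r Ht. rewrite Erho. eapply Rle_trans. apply fsum_abs.
    apply Rle_trans with (fsum N (fun l => a j l * (2 * Y))).
    - apply fsum_le; intros l. rewrite Rabs_mult, (Rabs_right (a j l)) by (apply Rle_ge; auto).
      apply Rmult_le_compat_l; auto. pose proof (Hy l t r Ht). pose proof (Hy j t r Ht).
      replace (y l t r - y j t r) with (y l t r + - y j t r) by ring.
      eapply Rle_trans. apply Rabs_triang. rewrite Rabs_Ropp. lra.
    - apply (fsum_term N (fun j => fsum N (fun l => a j l * (2 * Y)))). intros; apply fsum_nonneg; intros.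
      apply Rmult_le_pos; auto; lra. }
  assert (HP0 : 0 <= P) by (apply fsum_nonneg; intros; apply fsum_nonneg; intros; apply Rmult_le_pos; auto; lra).
  set (CR := fsum N (fun j => fsum q (fun r => fsum (m j) (fun c => Rabs (Rm j r c))))).
  assert (HCR : forall j, fsum q (fun r => fsum (m j) (fun c => Rabs (Rm j r c))) <= CR).
  { intros j. apply (fsum_term N (fun j => fsum q (fun r => fsum (m j) (fun c => Rabs (Rm j r c))))).
    intros; apply fsum_nonneg; intros; apply fsum_nonneg; intros; apply Rabs_pos. }
  assert (HCR0 : 0 <= CR) by (apply fsum_nonneg; intros; apply fsum_nonneg; intros; apply fsum_nonneg; intros; apply Rabs_pos).
  assert (HMV : forall j (v : vec (m j)) r, Rabs (matvec (Rm j) v r) <= CR * vnorm v).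
  { intros j v r. eapply Rle_trans. apply matvec_bound. apply Rmult_le_compat_r. apply vnorm_nonneg. apply HCR. }
  assert (Hu : forall j t r, 0 <= t -> Rabs (u j t r) <= CR * M + M * P).
  { intros j t r Ht. change (u j t r) with (- matvec (Rm j) (xi j t) r + k j t * rho j t r).
    eapply Rle_trans. apply Rabs_triang. rewrite Rabs_Ropp, Rabs_mult.
    pose proof (HMV j (xi j t) r). pose proof (Hxi j t Ht). pose proof (Hk j t Ht). pose proof (Hrho j t r Ht).
    pose proof (Rabs_pos (k j t)). pose proof (Rabs_pos (rho j t r)).
    assert (CR * vnorm (xi j t) <= CR * M) by (apply Rmult_le_compat_l; auto).
    assert (Rabs (k j t) * Rabs (rho j t r) <= M * P) by (apply Rmult_le_compat; auto). lra. }
  set (W := fsum N (fun j => vnorm (w j (1/2)))).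
  assert (HW0 : 0 <= W) by (apply fsum_nonneg; intros; apply vnorm_nonneg).
  assert (Hd : forall j t r, 1/2 <= t -> Rabs (d j t r) <= CR * W).
  { intros j t r Ht. change (d j t r) with (matvec (Rm j) (w j t) r). eapply Rle_trans. apply HMV.
    apply Rmult_le_compat_l; auto. eapply Rle_trans. apply Hw; auto.
    apply (fsum_term N (fun j => vnorm (w j (1/2)))). intros; apply vnorm_nonneg. }
  set (Mall := M + (CR * M + M * P) + CR * W).
  assert (0 <= CR * M) by (apply Rmult_le_pos; auto).
  assert (0 <= M * P) by (apply Rmult_le_pos; auto).
  assert (0 <= CR * W) by (apply Rmult_le_pos; auto).
  destruct (f_bound _ _ f Hf Mall) as [B HB].
  assert (Hfd : forall j t c, 1/2 <= t -> Rabs (f (x j t) (u j t) (d j t) c) <= Rabs B).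
  { intros j t c Ht. eapply Rle_trans; [|apply Rle_abs]. apply HB; intros r.
    - eapply Rle_trans. apply Hx; lra. unfold Mall; lra.
    - eapply Rle_trans. apply Hu; lra. unfold Mall; lra.
    - eapply Rle_trans. apply Hd; lra. unfold Mall; lra. }
  assert (Hxl : forall j c t t', 1/2 < t -> 1/2 < t' -> Rabs (x j t c - x j t' c) <= Rabs B * Rabs (t - t')).
  { intros j c. apply (deriv_lip (fun r => x j r c) (fun r => f (x j r) (u j r) (d j r) c) (1/2)).
    - intros r Hr. apply Hdyn; lra.
    - intros r Hr. apply Hfd; lra. }
  set (A := fsum N (fun j => fsum N (fun l => a j l))).
  assert (HA : forall j, fsum N (fun l => a j l) <= A).
  { intros; apply (fsum_term N (fun j => fsum N (fun l => a j l))); intros; apply fsum_nonneg; auto. }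
  assert (HA0 : 0 <= A) by (apply fsum_nonneg; intros; apply fsum_nonneg; auto).
  assert (Hrc : forall e, 0 < e -> exists del, 0 < del /\ forall t t', 1 <= t -> 1 <= t' -> Rabs (t - t') <= del ->
     forall j r, Rabs (rho j t r - rho j t' r) < e).
  { intros e He.
    set (e' := e / (2 * (A + 1))).
    assert (He' : 0 < e') by (unfold e'; apply Rdiv_lt_0_compat; lra).
    destruct (unif_cont _ _ h (C1_hloc _ _ h Hh) M e' He') as [dh [Hdh Hu']].
    set (Kn := INR n * Rabs B).
    assert (HKn : 0 <= Kn) by (unfold Kn; apply Rmult_le_pos; [apply pos_INR | apply Rabs_pos]).
    set (del := dh / (Kn + 1)).
    exists del; split. unfold del; apply Rdiv_lt_0_compat; lra.
    intros t t' Ht Ht' Htt j r.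
    assert (Hyc : forall l r', Rabs (y l t r' - y l t' r') < e').
    { intros l r'. apply (Hu' (x l t) (x l t')). intros c; apply Hx; lra.
      eapply Rle_lt_trans. apply (vnorm_bound _ _ (Rabs B * Rabs (t - t'))). intros c. unfold vsub. apply Hxl; lra.
      apply Rle_lt_trans with (Kn * del).
      unfold Kn. rewrite Rmult_assoc. apply Rmult_le_compat_l. apply pos_INR. apply Rmult_le_compat_l. apply Rabs_pos. auto.
      unfold del. replace (Kn * (dh / (Kn + 1))) with (dh - dh / (Kn + 1)) by (field; lra).
      assert (0 < dh / (Kn + 1)) by (apply Rdiv_lt_0_compat; lra). lra. }
    rewrite !Erho, <- fsum_minus.
    eapply Rle_lt_trans. apply fsum_abs.
    apply Rle_lt_trans with (fsum N (fun l => a j l * (2 * e'))).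
    - apply fsum_le; intros l.
      replace (a j l * (y l t r - y j t r) - a j l * (y l t' r - y j t' r)) with (a j l * ((y l t r - y l t' r) + - (y j t r - y j t' r))) by ring.
      rewrite Rabs_mult, (Rabs_right (a j l)) by (apply Rle_ge; auto). apply Rmult_le_compat_l; auto.
      eapply Rle_trans. apply Rabs_triang. rewrite Rabs_Ropp. pose proof (Hyc l r). pose proof (Hyc j r). lra.
    - rewrite (fsum_ext N _ (fun l => (2 * e') * a j l)) by (intros; ring). rewrite fsum_scal.
      pose proof (HA j). apply Rle_lt_trans with (2 * e' * A). apply Rmult_le_compat_l; [lra | apply HA].
      unfold e'. replace (2 * (e / (2 * (A + 1))) * A) with (e - e / (A + 1)) by (field; lra).
      assert (0 < e / (A + 1)) by (apply Rdiv_lt_0_compat; lra). lra. }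
  assert (Hrz : forall j r, tz (fun t => rho j t r)).
  { intros j r. apply (adapt (k j) (fun t => gamma j * vdot (rho j t) (rho j t)) (fun t => rho j t r) (gamma j) M).
    - apply Hgam.
    - intros t Ht. apply Hdyn; auto.
    - intros t Ht. apply Rmult_le_pos. left; apply Hgam. apply vdot_self_nonneg.
    - intros t Ht. apply Rmult_le_compat_l. left; apply Hgam.
      replace (rho j t r ^ 2) with (rho j t r * rho j t r) by ring.
      apply (fsum_term q (fun c => rho j t c * rho j t c)). intros; nra.
    - intros t Ht; apply Hk; auto.
    - intros e He. destruct (Hrc e He) as [del [Hdel Hdl]]. exists del; split; auto. }
  assert (Hedge : forall j l, 0 < a j l -> forall r, tz (fun t => y j t r - y l t r)).
  { intros j l Hjl r.
    set (Q := fun t => fsum N (fun i => fsum N (fun l => a i l * (y i t r - y l t r) ^ 2))).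
    assert (HQ : tz Q).
    { apply (tz_le _ (fun t => fsum N (fun i => 2 * Y * Rabs (rho i t r)))).
      - apply tz_fsum. intros i. apply tz_scal. apply tz_abs. apply Hrz.
      - exists 0. intros t Ht.
        assert (E := lap_id N a (fun i => y i t r) Hsym).
        assert (EQ : Q t = -2 * fsum N (fun i => y i t r * rho i t r)).
        { unfold Q. rewrite (fsum_ext N (fun i => y i t r * rho i t r) (fun i => y i t r * fsum N (fun l => a i l * (y l t r - y i t r))))
            by (intros; rewrite Erho; reflexivity). rewrite E. field. }
        rewrite EQ, Rabs_mult. replace (Rabs (-2)) with 2 by (rewrite Rabs_left by lra; ring).
        rewrite <- (Rmult_1_l (fsum N (fun i => 2 * Y * Rabs (rho i t r)))).
        replace 1 with (2 * / 2) at 1 by field. rewrite Rmult_assoc. apply Rmult_le_compat_l; [lra|].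
        rewrite <- fsum_scal. eapply Rle_trans. apply fsum_abs. apply fsum_le; intros i.
        rewrite Rabs_mult. pose proof (Hy i t r Ht). pose proof (Rabs_pos (rho i t r)).
        replace (/ 2 * (2 * Y * Rabs (rho i t r))) with (Y * Rabs (rho i t r)) by field.
        apply Rmult_le_compat_r; auto. }
    apply (tz_sq _ (a j l) Hjl).
    apply (tz_le _ Q); auto. exists 0; intros t Ht.
    rewrite Rabs_right by (apply Rle_ge, Rmult_le_pos; [lra| apply pow2_ge_0]).
    unfold Q. eapply Rle_trans. 2: apply (fsum_term N (fun i => fsum N (fun l => a i l * (y i t r - y l t r)^2)) j).
    apply (fsum_term N (fun l => a j l * (y j t r - y l t r)^2) l). intros; apply Rmult_le_pos; auto; apply pow2_ge_0.
    intros; apply fsum_nonneg; intros; apply Rmult_le_pos; auto; apply pow2_ge_0. }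
  assert (Hall : forall j l r, tz (fun t => y j t r - y l t r)).
  { intros j l. induction (Hconn j l) as [j l Hjl | j | j l o _ IH1 _ IH2].
    - apply Hedge; auto.
    - intros r. apply (tz_ext (fun _ => 0)). intros e He; exists 0; intros; rewrite Rabs_R0; lra. intros; ring.
    - intros r. apply (tz_ext (fun t => (y j t r - y l t r) + (y l t r - y o t r))). apply tz_plus; auto. intros; ring. }
  intros eps He.
  assert (HN : 0 < INR N).
  { destruct N. exact (Fin.case0 (fun _ => 0 < INR 0) i0). apply lt_0_INR; lia. }
  assert (Hc : forall r, tz (fun t => vsub (y i0 t) (vscale (/ INR N) (vfsum (fun j => y j t))) r)).
  { intros r. apply (tz_ext (fun t => / INR N * fsum N (fun j => y i0 t r - y j t r))).
    - apply tz_scal. apply tz_fsum. intros j. apply Hall.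
    - intros t. unfold vsub, vscale, vfsum. rewrite fsum_minus, fsum_const. field. lra. }
  assert (Hn : tz (fun t => vnorm (vsub (y i0 t) (vscale (/ INR N) (vfsum (fun j => y j t)))))).
  { apply (tz_le _ (fun t => fsum q (fun r => Rabs (vsub (y i0 t) (vscale (/ INR N) (vfsum (fun j => y j t))) r)))).
    - apply tz_fsum. intros r. apply tz_abs. apply Hc.
    - exists 0. intros t _. rewrite Rabs_right by (apply Rle_ge, vnorm_nonneg). apply vnorm_le_sum. }
  destruct (Hn eps He) as [T HT]. exists T. intros t Ht. specialize (HT t Ht).
  rewrite Rabs_right in HT by (apply Rle_ge, vnorm_nonneg). exact HT.
Qed.
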